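(* For every field $\mathbb{F}$, every $n^d\times n^d$ matrix $M$ over $\mathbb{F}$ and every $\kappa\subseteq[d]$, \[\mathrm{rank}(M^{\top_\kappa})\le n^{2\min\{|\kappa|,\,d-|\kappa|\}}\,\mathrm{rank}(M).\]
   Context: Rows and columns are indexed by $[n]^d$. For $k\in[d]$, $M^{\top_k}_{(i_1,\dots,i_d),(j_1,\dots,j_d)}=M_{(\dots,i_{k-1},j_k,i_{k+1},\dots),(\dots,j_{k-1},i_k,j_{k+1},\dots)}$ (swap the $k$-th row and column indices); $M^{\top_\kappa}$ is the composition over $k\in\kappa$. *)

(* Defs.v *)
From mathcomp Require Import all_boot all_order all_algebra.
Set Implicit Arguments. Unset Strict Implicit. Unset Printing Implicit Defensive.
Import GRing.Theory.
Local Open Scope ring_scope.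

Definition midx (d n : nat) : finType := {ffun 'I_d -> 'I_n}.

Definition swap_idx d n (kappa : {set 'I_d}) (i j : midx d n) : midx d n * midx d n :=
  ([ffun k => if k \in kappa then j k else i k],
   [ffun k => if k \in kappa then i k else j k]).

Definition partial_transpose (F : fieldType) d n (kappa : {set 'I_d})
  (M : 'M[F]_(#|midx d n|)) : 'M[F]_(#|midx d n|) :=
  \matrix_(a, b)
    let p := swap_idx kappa (enum_val a) (enum_val b) in
    M (enum_rank p.1) (enum_rank p.2).

(* Main.v *)
Require Import Defs.
From mathcomp Require Import all_boot all_order all_algebra.
Set Implicit Arguments. Unset Strict Implicit. Unset Printing Implicit Defensive.
Import GRing.Theory.
Local Open Scope ring_scope.

Definition Tk d n (K : {set 'I_d}) := {ffun {k : 'I_d | k \in K} -> 'I_n}.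
Definition resK d n (K : {set 'I_d}) (i : midx d n) : Tk n K := [ffun k => i (val k)].
Definition extK d n (K : {set 'I_d}) (s : Tk n K) (i : midx d n) : midx d n :=
  [ffun k => match (insub k : option {k : 'I_d | k \in K}) with
             | Some k' => s k' | None => i k end].

Lemma card_Tk d n (K : {set 'I_d}) : #|Tk n K| = (n ^ #|K|)%N.
Proof. by rewrite card_ffun card_ord card_sig. Qed.

Lemma ext_res d n (K : {set 'I_d}) (i j : midx d n) :
  extK (resK K j) i = [ffun k => if k \in K then j k else i k].
Proof.
apply/ffunP=> k; rewrite !ffunE; case: insubP => [u _ <-|Hk].
  by have /= -> := valP u; rewrite ffunE.
by rewrite (negbTE Hk).
Qed.

Lemma rank_sum_factor (F : fieldType) m p (T : finType)
  (f : T -> 'I_m -> F) (g : T -> 'I_p -> F) (N : 'M[F]_(m, p)) :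
  (forall a b, N a b = \sum_t f t a * g t b) -> (\rank N <= #|T|)%N.
Proof.
move=> H.
have -> : N = (\matrix_(a < m, k < #|T|) f (enum_val k) a) *m
              (\matrix_(k < #|T|, b < p) g (enum_val k) b).
  apply/matrixP => a b; rewrite H !mxE.
  rewrite (reindex (@enum_val T (mem T))) /=; last first.
    by exists enum_rank => x _; rewrite ?enum_valK ?enum_rankK.
  by apply: eq_bigr => k _; rewrite !mxE.
exact: leq_trans (mxrankM_maxl _ _) (rank_leq_col _).
Qed.

Lemma sum_ind (F : fieldType) (T : finType) (s0 : T) (X : T -> F) :
  \sum_s ((s0 == s)%:R * X s) = X s0.
Proof.
rewrite (bigD1 s0) //= eqxx mul1r big1 ?addr0 // => s /negbTE.
by rewrite eq_sym => ->; rewrite mul0r.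
Qed.

Lemma key (F : fieldType) d n (K : {set 'I_d}) (U V : Tk n K -> midx d n -> F)
  (N : 'M[F]_#|midx d n|) :
  (forall a b, N a b = U (resK K (enum_val b)) (enum_val a) *
                       V (resK K (enum_val a)) (enum_val b)) ->
  (\rank N <= n ^ (2 * #|K|))%N.
Proof.
move=> H.
apply: leq_trans (rank_sum_factor (T := (Tk n K * Tk n K)%type)
  (f := fun st a => ((resK K (enum_val a) == st.2)%:R * U st.1 (enum_val a)))
  (g := fun st b => ((resK K (enum_val b) == st.1)%:R * V st.2 (enum_val b))) _) _.
  move=> a b; rewrite H.
  transitivity (\sum_s \sum_t ((resK K (enum_val b) == s)%:R *
     ((resK K (enum_val a) == t)%:R * (U s (enum_val a) * V t (enum_val b))))).
    symmetry; under eq_bigr do rewrite -mulr_sumr sum_ind.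
    by rewrite sum_ind.
  rewrite pair_bigA /=; apply: eq_bigr => -[s t] _ /=.
  by rewrite [RHS]mulrACA [X in _ = X * _]mulrC -mulrA.
by rewrite card_prod card_Tk mul2n -addnn expnD.
Qed.

Lemma rank_big (F : fieldType) m p (I : finType) (N : I -> 'M[F]_(m, p)) :
  (\rank (\sum_k N k)%R <= \sum_k \rank (N k))%N.
Proof.
elim/big_ind2: _ => //; first by rewrite mxrank0.
move=> x1 x2 y1 y2 h1 h2; exact: leq_trans (mxrank_add _ _) (leq_add h1 h2).
Qed.

Theorem lemma3p8 (F : fieldType) (d n : nat) (kappa : {set 'I_d})
  (M : 'M[F]_(#|midx d n|)) :
  (\rank (partial_transpose kappa M)
     <= n ^ (2 * minn #|kappa| (d - #|kappa|)) * \rank M)%N.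
Proof.
set r := \rank M.
set c := (n ^ (2 * minn #|kappa| (d - #|kappa|)))%N.
pose L : 'M[F]_#|midx d n| := col_ebase M *m pid_mx r.
pose R := row_ebase M.
have HM : M = L *m R by rewrite /L /R /r mulmx_ebase.
have HL : forall a (k : 'I_#|midx d n|), (r <= k)%N -> L a k = 0.
  move=> a k hk; rewrite !mxE big1 // => l _.
  rewrite mxE; case: eqP => [hl|]; last by rewrite andFb mulr0.
  by rewrite hl ltnNge hk mulr0.
clearbody L R.
pose N (k : 'I_#|midx d n|) : 'M[F]_#|midx d n| := \matrix_(a, b)
  (L (enum_rank (swap_idx kappa (enum_val a) (enum_val b)).1) k *
   R k (enum_rank (swap_idx kappa (enum_val a) (enum_val b)).2)).
have HPT : partial_transpose kappa M = \sum_k N k.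
  apply/matrixP => a b; rewrite summxE !mxE /= HM mxE.
  by apply: eq_bigr => k _; rewrite mxE.
have HNk : forall k, (\rank (N k) <= (k < r) * c)%N.
  move=> k; case: ltnP => hk; last first.
    have -> : N k = 0; last by rewrite mxrank0.
    by apply/matrixP => a b; rewrite !mxE HL // mul0r.
  rewrite mul1n /c; case: (leqP #|kappa| (d - #|kappa|)) => hmin.
    apply: (key (U := fun s i => L (enum_rank (extK s i)) k)
                (V := fun t j => R k (enum_rank (extK t j)))) => a b.
    by rewrite mxE !ext_res /swap_idx.
  have -> : (d - #|kappa| = #|~: kappa|)%N by rewrite [in RHS]cardsCs setCK card_ord.
  apply: (key (U := fun s i => R k (enum_rank (extK s i)))
              (V := fun t j => L (enum_rank (extK t j)) k)) => a b.
  rewrite mxE !ext_res /swap_idx mulrC; congr (_ * _); congr (_ _ _);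
    congr (enum_rank _); apply/ffunP => x; rewrite !ffunE in_setC if_neg //.
rewrite HPT; apply: leq_trans (rank_big _) _.
apply: leq_trans (leq_sum _ (fun k (_ : true) => HNk k)) _.
rewrite (bigID (fun k : 'I_#|midx d n| => (k < r)%N)) /=.
rewrite [X in (_ + X)%N]big1 ?addn0; last by move=> k /negbTE ->.
rewrite (eq_bigr (fun _ => c)); last by move=> k ->; rewrite mul1n.
rewrite -(big_ord_widen_cond _ (fun _ => true) (fun _ => c)) /=;
  last exact: rank_leq_row.
by rewrite sum_nat_const card_ord mulnC.
Qed.
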